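(* Let $K_n=(V,E)$ be the complete graph and let $M_1,M_2$ be matchings in $K_n$ with $M_1\not\subseteq M_2$ and $M_2\not\subseteq M_1$. Then either the graph $(V,M_1\triangle M_2)$ has at most two (possibly trivial) connected components, or $\bm{c}=\chi(M_1)-\chi(M_2)$ is a circuit of the Matching polytope $P_{\mathrm{match}}(n)=\operatorname{conv}\{\chi(M): M\text{ a matching in }K_n\}$, with circuits taken with respect to the linear description $$\bm{x}(E[S])\le (|S|-1)/2 \ \text{for all } S\subseteq V,\ |S| \text{ odd},\ |S|\ge 3;\quad \bm{x}(\delta(v))\le 1\ \text{for all } v\in V;\quad \bm{x}\ge \bm{0}.$$
   Context: $\chi(M)\in\{0,1\}^E$ is the characteristic vector of $M$; $\triangle$ is symmetric difference; a trivial component is a single node; $E[S]$ is the set of edges with both endpoints in $S$, $\delta(v)$ the set of edges incident to $v$, $\bm{x}(F)=\sum_{e\in F}x_e$. Circuits: for a polytope $P=\{\bm{x}: B\bm{x}\le \bm{d}\}$ given by a fixed linear system, a nonzero vector $\bm{g}$ is a circuit of $P$ if $\operatorname{supp}(B\bm{g})$ is inclusion-minimal among the sets $\operatorname{supp}(B\bm{y})$ with $\bm{y}\neq\bm{0}$. *)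

(* Defs.v *)
From HB Require Import structures.
From mathcomp Require Import all_boot all_order all_algebra.
From mathcomp Require Import reals.
Set Implicit Arguments. Unset Strict Implicit. Unset Printing Implicit Defensive.
Import Order.TTheory GRing.Theory Num.Theory.
Local Open Scope ring_scope.

(* Edges of the complete graph K_n on V = 'I_n : the 2-element subsets of V. *)
Definition edge (n : nat) := {e : {set 'I_n} | #|e| == 2%N}.

Definition is_matching (n : nat) (M : {set edge n}) : Prop :=
  forall e f : edge n, e \in M -> f \in M -> e != f -> [disjoint val e & val f].

Definition symdiff (n : nat) (A B : {set edge n}) : {set edge n} :=
  (A :\: B) :|: (B :\: A).

Definition adj (n : nat) (F : {set edge n}) : rel 'I_n :=
  fun u v => [exists e in F, (u \in val e) && (v \in val e)] && (u != v).

(* Number of connected components (trivial ones included) of (V, F). *)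
Definition ncomp (n : nat) (F : {set edge n}) : nat :=
  n_comp (adj F) [set: 'I_n].

Definition chi (R : realType) (n : nat) (M : {set edge n}) : edge n -> R :=
  fun e => (e \in M)%:R.

(* Row indices of the linear system:
   inl (inl S) : x(E[S]) <= (|S|-1)/2 (only for |S| odd, |S| >= 3)
   inl (inr v) : x(delta(v)) <= 1
   inr e       : -x_e <= 0 *)
Definition row_index (n : nat) := ({set 'I_n} + 'I_n + edge n)%type.

Definition valid_row (n : nat) (r : row_index n) : bool :=
  match r with
  | inl (inl X) => odd #|X| && (3 <= #|X|)%N
  | _ => true
  end.

Definition Bmul (R : realType) (n : nat) (y : edge n -> R) (r : row_index n) : R :=
  match r with
  | inl (inl X) => \sum_(e : edge n | val e \subset X) y e
  | inl (inr v) => \sum_(e : edge n | v \in val e) y e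
  | inr e => - y e
  end.

Definition suppB (R : realType) (n : nat) (y : edge n -> R) : {set row_index n} :=
  [set r | valid_row r & Bmul y r != 0].

Definition is_circuit (R : realType) (n : nat) (g : edge n -> R) : Prop :=
  (exists e, g e != 0) /\
  ~ (exists y : edge n -> R, (exists e, y e != 0) /\ suppB y \proper suppB g).

(* Main.v *)
Require Import Defs.
From mathcomp Require Import all_boot all_order all_algebra.
From mathcomp Require Import reals.
From mathcomp Require Import zify ring lra.
Import GRing.Theory Num.Theory.
Local Open Scope ring_scope.

Lemma match_eq {n} {M : {set edge n}} {e g : edge n} {u : 'I_n} :
  is_matching M -> e \in M -> g \in M -> u \in val e -> u \in val g -> e = g.
Proof.
move=> hM he hg ue ug; apply/eqP; apply/negPn/negP => neq.
by move: (disjointFr (hM _ _ he hg neq) ue); rewrite ug.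
Qed.

Lemma sum2 {R : realType} {n} (P : pred (edge n)) (z : edge n -> R) {e f : edge n} :
  e != f -> P e -> P f -> (forall g, P g -> g != e -> g != f -> z g = 0) ->
  \sum_(g | P g) z g = z e + z f.
Proof.
move=> nef Pe Pf hz.
rewrite (bigD1 e) //= (bigD1 f) /=; last by rewrite Pf eq_sym.
rewrite big1 ?addr0 // => g /andP[/andP[Pg ge] gf]; exact: hz.
Qed.

Lemma edge_ends {n} (e : edge n) : exists u v, u != v /\ val e = [set u; v].
Proof. by apply/cards2P; exact: (valP e). Qed.

Lemma end1 {n} (e : edge n) : exists u, u \in val e.
Proof. by have [u [v [_ ->]]] := edge_ends e; exists u; rewrite !inE eqxx. Qed.

Lemma edge_sub {n} (e g : edge n) : val g \subset val e -> g = e.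
Proof.
move=> s; apply: val_inj; apply/eqP; rewrite eqEcard s.
by rewrite (eqP (valP e)) (eqP (valP g)).
Qed.

Lemma three {T : finType} (A : {set T}) : (2 < #|A|)%N ->
  exists a b c, [/\ a \in A, b \in A, c \in A & [/\ a != b, a != c & b != c]].
Proof.
move=> hA.
have /set0Pn [a aA] : A != set0 by rewrite -card_gt0; lia.
have h1 : (1 < #|A :\ a|)%N by move: hA; rewrite (cardsD1 a A) aA; lia.
have /set0Pn [b] : A :\ a != set0 by rewrite -card_gt0; lia.
rewrite !inE => /andP [ba bA].
have : (0 < #|A :\ a :\ b|)%N.
  by move: h1; rewrite (cardsD1 b (A :\ a)) !inE ba bA; lia.
rewrite card_gt0 => /set0Pn [w]; rewrite !inE => /and3P [wb wa wA].
by exists a, b, w; split => //; split => //; rewrite eq_sym.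
Qed.

Theorem lemma3 (R : realType) (n : nat) (M1 M2 : {set edge n}) :
  is_matching M1 -> is_matching M2 ->
  ~~ (M1 \subset M2) -> ~~ (M2 \subset M1) ->
  (ncomp (symdiff M1 M2) <= 2)%N \/
  is_circuit (fun e => chi R M1 e - chi R M2 e).
Proof.
move=> m1 m2 n12 n21.
set D := symdiff M1 M2.
case: (leqP (ncomp D) 2) => [h|hc]; [by left | right].
set c := (fun e => _ - _).
have inD : forall e, (e \in D) = ((e \in M1) != (e \in M2)).
  move=> e; rewrite /D /symdiff !inE.
  by case: (e \in M1); case: (e \in M2).
have cE : forall e, c e = (e \in M1)%:R - (e \in M2)%:R by [].
have c0 : forall e, e \notin D -> c e = 0.
  by move=> e; rewrite inD negbK cE => /eqP ->; rewrite subrr.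
have cval : forall e, e \in D -> c e = if e \in M1 then 1 else -1.
  move=> e; rewrite inD cE; case: (e \in M1); case: (e \in M2) => //= _.
    by rewrite subr0.
  by rewrite sub0r.
have c1 : forall e, e \in D -> c e * c e = 1.
  by move=> e eD; rewrite cval //; case: (e \in M1); rewrite ?mulr1 ?mulrNN ?mulr1.
have share : forall e f u, e \in D -> f \in D -> e != f -> u \in val e -> u \in val f ->
   c f = - c e /\ (forall g, g \in D -> u \in val g -> g = e \/ g = f).
  move=> e f u eD fD nef ue uf.
  have key : forall g h, g \in D -> h \in D -> u \in val g -> u \in val h ->
      (g \in M1) = (h \in M1) -> g = h.
    move=> g h; rewrite !inD => gD hD ug uh E.
    case Eg: (g \in M1) E gD => E gD.
      by apply: (match_eq m1 _ _ ug uh); rewrite // -E.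
    apply: (match_eq m2 _ _ ug uh).
      by move: gD; case: (g \in M2).
    by move: hD; rewrite -E; case: (h \in M2).
  have ne1 : (e \in M1) != (f \in M1).
    by apply: contra nef => /eqP E; apply/eqP; apply: key.
  split.
    rewrite !cval //; move: ne1; case: (e \in M1); case: (f \in M1) => //= _.
    by rewrite opprK.
  move=> g gD ug.
  case E: ((g \in M1) == (e \in M1)).
    by left; apply: key => //; apply/eqP.
  right; apply: key => //; move: E ne1.
  by case: (g \in M1); case: (e \in M1); case: (f \in M1).
split.
  case/subsetPn: n12 => e eM1 eM2; exists e.
  by rewrite cE eM1 (negbTE eM2) /= subr0 oner_eq0.
move=> [y [[e0 ye0] hp]].
have yz : forall r, valid_row r -> Bmul c r = 0 -> Bmul y r = 0.
  move=> r vr cr; apply/eqP; apply: contraT => nz.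
  have : r \in suppB y by rewrite /suppB inE vr nz.
  by move/(subsetP (proper_sub hp)); rewrite /suppB inE cr eqxx andbF.
have y0 : forall e, e \notin D -> y e = 0.
  move=> e eD; have := yz (inr e) isT; rewrite /Bmul c0 // oppr0 => /(_ erefl) /eqP.
  by rewrite oppr_eq0 => /eqP.
pose rr e := y e * c e.
have tieV : forall e f u, e \in D -> f \in D -> u \in val e -> u \in val f -> rr e = rr f.
  move=> e f u eD fD ue uf; have [-> //|nef] := eqVneq e f.
  have [cfe hg] := share e f u eD fD nef ue uf.
  have Bc : Bmul c (inl (inr u)) = 0.
    rewrite /Bmul (sum2 (fun g => u \in val g) c nef ue uf) ?cfe ?addrN //.
    move=> g ug ge gf; apply: c0; apply/negP => gD.
    by case: (hg g gD ug) => E; [rewrite E eqxx in ge | rewrite E eqxx in gf].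
  have := yz (inl (inr u)) isT Bc; rewrite /Bmul (sum2 (fun g => u \in val g) y nef ue uf); last first.
    move=> g ug ge gf; apply: y0; apply/negP => gD.
    by case: (hg g gD ug) => E; [rewrite E eqxx in ge | rewrite E eqxx in gf].
  move=> /eqP; rewrite addr_eq0 => /eqP yf.
  by rewrite /rr yf cfe mulrN mulNr.
have tieP : forall u v, connect (adj D) u v -> forall e f, e \in D -> f \in D ->
    u \in val e -> v \in val f -> rr e = rr f.
  move=> u v /connectP [p pp ->] {v}.
  elim: p u pp => [|w p IH] u /= pp e f eD fD ue uf.
    exact: tieV ue uf.
  case/andP: pp; rewrite /adj => /andP [/existsP [g /andP [gD /andP [ug wg]]] _] pp.
  rewrite (tieV e g u) //; exact: IH pp g f gD fD wg uf.
have symadj : symmetric (adj D).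
  move=> u v; rewrite /adj eq_sym; congr (_ && _); apply: eq_existsb => g.
  by rewrite [(u \in _) && _]andbC.
have sym := sym_connect_sym symadj.
pose K := fingraph.root (adj D).
have Kedge : forall e u v, e \in D -> u \in val e -> v \in val e -> K u = K v.
  move=> e u v eD ue ve; apply/(fingraph.rootP sym).
  have [->|uv] := eqVneq u v; first exact: connect0.
  apply: connect1; rewrite /adj uv andbT; apply/existsP; exists e.
  by rewrite eD ue ve.
have tieK : forall e f x z, e \in D -> f \in D -> x \in val e -> z \in val f ->
    K x = K z -> rr e = rr f.
  move=> e f x z eD fD xe zf Kxz; apply: (tieP x z) => //.
  exact/(fingraph.rootP sym).
have tieC : forall e f x z w, e \in D -> f \in D -> x \in val e -> z \in val f ->
    K x <> K z -> K w <> K x -> K w <> K z -> c f = - c e -> rr e = rr f.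
  move=> e f x z w eD fD xe zf Kxz Kwx Kwz cfe.
  have nef : e != f.
    by apply/eqP => ef; apply: Kxz; rewrite ef in xe; exact: (Kedge f x z fD xe zf).
  set S := val e :|: val f :|: [set w].
  have classify : forall t, t \in S ->
      [\/ K t = K x /\ t \in val e, K t = K z /\ t \in val f | t = w].
    move=> t; rewrite !inE => /orP [/orP [te|tf]|/eqP tw].
    - by apply: Or31; split => //; exact: (Kedge e t x eD te xe).
    - by apply: Or32; split => //; exact: (Kedge f t z fD tf zf).
    - by apply: Or33.
  have hS : forall g, g \in D -> val g \subset S -> g = e \/ g = f.
    move=> g gD gS.
    have [p [q [/eqP pq gpq]]] := edge_ends g.
    have pg : p \in val g by rewrite gpq !inE eqxx.
    have qg : q \in val g by rewrite gpq !inE eqxx orbT.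
    have Kpq := Kedge g p q gD pg qg.
    case: (classify p (subsetP gS p pg)) => [[Kp pe]|[Kp pf]|pw];
    case: (classify q (subsetP gS q qg)) => [[Kq qe]|[Kq qf]|qw];
      try (exfalso; congruence).
    - left; apply: edge_sub; apply/subsetP => t; rewrite gpq !inE.
      by case/orP => /eqP ->.
    - right; apply: edge_sub; apply/subsetP => t; rewrite gpq !inE.
      by case/orP => /eqP ->.
  have eS : val e \subset S by rewrite /S -setUA subsetUl.
  have fS : val f \subset S.
    by apply: subset_trans (subsetUr _ _) (subsetUl _ _).
  have cardS : #|S| = 5%N.
    have d1 : val e :&: val f = set0.
      apply/setP => t; rewrite !inE; apply/negP => /andP [te tf].
      by apply: Kxz; rewrite -(Kedge e t x eD te xe) (Kedge f t z fD tf zf).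
    have d2 : (val e :|: val f) :&: [set w] = set0.
      apply/setP => t; rewrite !inE; apply/negP => /andP [/orP [te|tf] /eqP tw];
        subst t.
        by apply: Kwx; exact: (Kedge e w x eD te xe).
      by apply: Kwz; exact: (Kedge f w z fD tf zf).
    rewrite /S cardsU d2 cards0 subn0 cardsU d1 cards0 subn0 cards1.
    by rewrite (eqP (valP e)) (eqP (valP f)).
  have vS : valid_row (inl (inl S) : row_index n) by rewrite /= cardS.
  have zeroS : forall (z' : edge n -> R), (forall g, g \notin D -> z' g = 0) ->
      Bmul z' (inl (inl S)) = z' e + z' f.
    move=> z' hz; rewrite /Bmul (sum2 (fun g => val g \subset S) z' nef eS fS) //.
    move=> g gS ge gf; apply: hz; apply/negP => gD.
    by case: (hS g gD gS) => E; [rewrite E eqxx in ge | rewrite E eqxx in gf].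
  have Bc : Bmul c (inl (inl S)) = 0 by rewrite zeroS // cfe addrN.
  have := yz _ vS Bc; rewrite zeroS // => /eqP; rewrite addr_eq0 => /eqP yf.
  by rewrite /rr yf cfe mulrN mulNr.
have [a [b [w0 [Kab [Kaw Kbw]]]]] : exists a b w0, K a <> K b /\ K a <> K w0 /\ K b <> K w0.
  pose A := [set x | fingraph.roots (adj D) x].
  have cA : #|A| = ncomp D.
    by rewrite /ncomp /n_comp_mem; apply: eq_card => x; rewrite !inE andbT.
  have hA : (2 < #|A|)%N by rewrite cA.
  have [a [b [w0 [aA bA wA [ab aw bw]]]]] := three A hA.
  move: aA bA wA; rewrite !inE /fingraph.roots => /eqP Ka /eqP Kb /eqP Kw.
  exists a, b, w0; rewrite /K Ka Kb Kw.
  by split; [|split]; apply/eqP.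
have pick : forall x z, exists w, K w <> K x /\ K w <> K z.
  move=> x z.
  have H : forall t, (K t <> K x /\ K t <> K z) \/ (K t = K x \/ K t = K z).
    move=> t; case: (K t =P K x) => h1; case: (K t =P K z) => h2; tauto.
  case: (H a) => [ha|ha]; first by exists a.
  case: (H b) => [hb|hb]; first by exists b.
  case: (H w0) => [hw|hw]; first by exists w0.
  exfalso; case: ha => ?; case: hb => ?; case: hw => ?; congruence.
have csign : forall e, e \in D -> c e = 1 \/ c e = -1.
  by move=> e eD; rewrite cval //; case: (e \in M1); auto.
have allr : forall e f, e \in D -> f \in D -> rr e = rr f.
  move=> e f eD fD.
  have [x xe] := end1 e; have [z zf] := end1 f.
  case: (K x =P K z) => Kxz; first exact: (tieK e f x z).
  have [w [wx wz]] := pick x z.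
  have [cf|cf] : c f = - c e \/ c f = c e.
    by case: (csign e eD) => ->; case: (csign f fD) => ->; rewrite ?opprK; auto.
    exact: (tieC e f x z w).
  have [g [gD cg]] : exists g, g \in D /\ c g = - c e.
    case: (csign e eD) => ce.
      case/subsetPn: n21 => g gM2 gM1; exists g.
      have gD : g \in D by rewrite inD gM2 (negbTE gM1).
      by split => //; rewrite cval // (negbTE gM1) ce.
    case/subsetPn: n12 => g gM1 gM2; exists g.
    have gD : g \in D by rewrite inD gM1 (negbTE gM2).
    by split => //; rewrite cval // gM1 ce opprK.
  have [t tg] := end1 g.
  have cfg : c f = - c g by rewrite cg opprK.
  case: (K t =P K x) => Ktx.
    rewrite (tieK e g x t) //; apply: (tieC g f t z w) => //; move=> ?; congruence.
  case: (K t =P K z) => Ktz.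
    rewrite (tieC e g x t w) //; try (move=> ?; congruence).
    exact: (tieK g f t z).
  have h1 : K x <> K t by move=> ?; congruence.
  have h2 : K z <> K x by move=> ?; congruence.
  have h3 : K z <> K t by move=> ?; congruence.
  have h4 : K x <> K z by move=> ?; congruence.
  rewrite (tieC e g x t z) //.
  exact: (tieC g f t z x).
have e0D : e0 \in D by apply: contraT => /y0 E; rewrite E eqxx in ye0.
have hlam : forall e, y e = rr e0 * c e.
  move=> e; case eD: (e \in D); last by rewrite c0 ?eD // y0 ?eD // mulr0.
  by rewrite (allr e0 e) // /rr -mulrA c1 // mulr1.
have lam0 : rr e0 != 0.
  by apply: contraNneq ye0 => E; rewrite hlam E mul0r.
have By : forall r, Bmul y r = rr e0 * Bmul c r.
  case=> [[X|v]|ed]; rewrite /Bmul ?mulr_sumr.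
  - by apply: eq_bigr => g _; exact: hlam.
  - by apply: eq_bigr => g _; exact: hlam.
  - by rewrite hlam mulrN.
have E : suppB y = suppB c.
  by apply/setP => r; rewrite /suppB !inE By mulf_eq0 (negbTE lam0).
by move: hp; rewrite E (negbTE (proper_irrefl _)).
Qed.
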